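(* Let $\overline C,\underline C,V,\overline V$ be real numbers with $\overline C>\underline C>0$, $V>0$, $\overline V+V\le\overline C$ and $\underline C<\overline V<\underline C+V$. Let $$\mathcal P_2=\{(x_{t-1},x_t,y_{t-1},y_t)\in\mathbb R_+^2\times\{0,1\}^2:\ -x_i+\underline C y_i\le 0\ (i\in\{t-1,t\}),\ x_i-\overline C y_i\le 0\ (i\in\{t-1,t\}),$$ $$x_t-x_{t-1}\le Vy_{t-1}+\overline V(1-y_{t-1}),\ x_{t-1}-x_t\le Vy_t+\overline V(1-y_t)\},$$ and let $\mathcal Q_2$ be the set of $(x_{t-1},x_t,y_{t-1},y_t)\in\mathbb R^4$ satisfying $y_i\le 1$ and $\underline C y_i\le x_i\le\overline C y_i$ for $i\in\{t-1,t\}$; $x_{t-1}\le\overline V y_{t-1}+(\overline C-\overline V)y_t$; $x_t\le(\overline C-\overline V)y_{t-1}+\overline V y_t$; $x_t-x_{t-1}\le(\underline C+V)y_t-\underline C y_{t-1}$; $x_t-x_{t-1}\le\overline V y_t-(\overline V-V)y_{t-1}$; $x_{t-1}-x_t\le(\underline C+V)y_{t-1}-\underline C y_t$; $x_{t-1}-x_t\le\overline V y_{t-1}-(\overline V-V)y_t$. Then $\mathcal Q_2$ equals the convex hull of $\mathcal P_2$.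
   Context: Here $x_{t-1},x_t,y_{t-1},y_t$ are just the names of four real coordinates (generation amounts and on/off statuses of a generator in two consecutive periods); $\mathbb R_+$ denotes the nonnegative reals. *)

(* Defs.v *)
From Stdlib Require Import Reals List.
Open Scope R_scope.

(* A point (x_{t-1}, x_t, y_{t-1}, y_t) of R^4. *)
Record pt4 := Pt4 { xp : R; xc : R; yp : R; yc : R }.

Definition pt_add (p q : pt4) : pt4 :=
  Pt4 (xp p + xp q) (xc p + xc q) (yp p + yp q) (yc p + yc q).
Definition pt_scale (a : R) (p : pt4) : pt4 :=
  Pt4 (a * xp p) (a * xc p) (a * yp p) (a * yc p).
Definition pt_zero : pt4 := Pt4 0 0 0 0.

Definition wsum (l : list (R * pt4)) : pt4 :=
  fold_right (fun ap acc => pt_add (pt_scale (fst ap) (snd ap)) acc) pt_zero l.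
Definition wtotal (l : list (R * pt4)) : R :=
  fold_right (fun ap acc => fst ap + acc) 0 l.

Definition conv_hull (S : pt4 -> Prop) (z : pt4) : Prop :=
  exists l : list (R * pt4),
    Forall (fun ap => 0 <= fst ap /\ S (snd ap)) l /\
    wtotal l = 1 /\ z = wsum l.

Definition binary (y : R) : Prop := y = 0 \/ y = 1.

Definition P2 (Cup Clo V Vup : R) (p : pt4) : Prop :=
  let x1 := xp p in let x2 := xc p in let y1 := yp p in let y2 := yc p in
  0 <= x1 /\ 0 <= x2 /\ binary y1 /\ binary y2 /\
  - x1 + Clo * y1 <= 0 /\ - x2 + Clo * y2 <= 0 /\
  x1 - Cup * y1 <= 0 /\ x2 - Cup * y2 <= 0 /\
  x2 - x1 <= V * y1 + Vup * (1 - y1) /\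
  x1 - x2 <= V * y2 + Vup * (1 - y2).

Definition Q2 (Cup Clo V Vup : R) (p : pt4) : Prop :=
  let x1 := xp p in let x2 := xc p in let y1 := yp p in let y2 := yc p in
  y1 <= 1 /\ y2 <= 1 /\
  Clo * y1 <= x1 /\ x1 <= Cup * y1 /\
  Clo * y2 <= x2 /\ x2 <= Cup * y2 /\
  x1 <= Vup * y1 + (Cup - Vup) * y2 /\
  x2 <= (Cup - Vup) * y1 + Vup * y2 /\
  x2 - x1 <= (Clo + V) * y2 - Clo * y1 /\
  x2 - x1 <= Vup * y2 - (Vup - V) * y1 /\
  x1 - x2 <= (Clo + V) * y1 - Clo * y2 /\
  x1 - x2 <= Vup * y1 - (Vup - V) * y2.

(* Main.v *)
Require Import Defs.
From Stdlib Require Import Reals Lra Psatz List.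
Open Scope R_scope.

Definition Q2h (Cup Clo V Vup w : R) (p : pt4) : Prop :=
  let x1 := xp p in let x2 := xc p in let y1 := yp p in let y2 := yc p in
  y1 <= w /\ y2 <= w /\
  Clo * y1 <= x1 /\ x1 <= Cup * y1 /\
  Clo * y2 <= x2 /\ x2 <= Cup * y2 /\
  x1 <= Vup * y1 + (Cup - Vup) * y2 /\
  x2 <= (Cup - Vup) * y1 + Vup * y2 /\
  x2 - x1 <= (Clo + V) * y2 - Clo * y1 /\
  x2 - x1 <= Vup * y2 - (Vup - V) * y1 /\
  x1 - x2 <= (Clo + V) * y1 - Clo * y2 /\
  x1 - x2 <= Vup * y1 - (Vup - V) * y2.

Lemma Q2h_zero Cup Clo V Vup : Q2h Cup Clo V Vup 0 pt_zero.
Proof. unfold Q2h, pt_zero; simpl; lra. Qed.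

Lemma Q2h_add Cup Clo V Vup w1 w2 p q :
  Q2h Cup Clo V Vup w1 p -> Q2h Cup Clo V Vup w2 q ->
  Q2h Cup Clo V Vup (w1 + w2) (pt_add p q).
Proof. destruct p, q; unfold Q2h, pt_add; simpl; lra. Qed.

Lemma Q2h_scale Cup Clo V Vup w a p : 0 <= a ->
  Q2h Cup Clo V Vup w p -> Q2h Cup Clo V Vup (a * w) (pt_scale a p).
Proof.
  destruct p as [x1 x2 y1 y2]; unfold Q2h, pt_scale; simpl.
  intros Ha (H1&H2&H3&H4&H5&H6&H7&H8&H9&H10&H11&H12).
  repeat split; nra.
Qed.

Lemma P2_Q2h Cup Clo V Vup p :
  Cup > Clo -> Clo > 0 -> V > 0 -> Vup + V <= Cup -> Clo < Vup -> Vup < Clo + V ->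
  P2 Cup Clo V Vup p -> Q2h Cup Clo V Vup 1 p.
Proof.
  destruct p as [x1 x2 y1 y2]; unfold P2, Q2h, binary; simpl.
  intros ? ? ? ? ? ? (A1&A2&[B|B]&[C|C]&H); subst; lra.
Qed.

Lemma hull_sub Cup Clo V Vup p :
  Cup > Clo -> Clo > 0 -> V > 0 -> Vup + V <= Cup -> Clo < Vup -> Vup < Clo + V ->
  conv_hull (P2 Cup Clo V Vup) p -> Q2 Cup Clo V Vup p.
Proof.
  intros ? ? ? ? ? ? [l [HF [Ht Hz]]].
  assert (Q2h Cup Clo V Vup (wtotal l) (wsum l)).
  { clear Ht Hz. induction HF as [|[a q] l [Ha Hq] _ IH]; simpl.
    - apply Q2h_zero.
    - apply Q2h_add; auto. replace a with (a * 1) at 1 by ring.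
      apply Q2h_scale; auto. apply P2_Q2h; auto. }
  rewrite Ht, <- Hz in H5. unfold Q2h, Q2 in *. exact H5.
Qed.

Definition swap (p : pt4) : pt4 := Pt4 (xc p) (xp p) (yc p) (yp p).

Lemma swap_hull S p : (forall q, S q -> S (swap q)) ->
  conv_hull S (swap p) -> conv_hull S p.
Proof.
  intros HS [l [HF [Ht Hz]]].
  exists (map (fun ap => (fst ap, swap (snd ap))) l). split; [|split].
  - rewrite Forall_map. eapply Forall_impl; [|exact HF].
    intros [a q] [? ?]; simpl; split; auto.
  - rewrite <- Ht. clear. induction l; simpl; auto. rewrite IHl; auto.
  - assert (E : forall l, wsum (map (fun ap => (fst ap, swap (snd ap))) l) = swap (wsum l)).
    { clear. induction l as [|[a q] l IH]; simpl; auto. rewrite IH. reflexivity. }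
    rewrite E, <- Hz. destruct p; reflexivity.
Qed.

Lemma split_lemma u v Alo Ahi Blo Bhi s :
  0 <= u -> 0 <= v -> Alo <= Ahi -> Blo <= Bhi ->
  u * Alo + v * Blo <= s -> s <= u * Ahi + v * Bhi ->
  exists a b, Alo <= a <= Ahi /\ Blo <= b <= Bhi /\ s = u * a + v * b.
Proof.
  intros. set (Lo := u * Alo + v * Blo). set (Hi := u * Ahi + v * Bhi).
  destruct (Rlt_dec Lo Hi) as [Hl|Hl].
  - set (t := (s - Lo) / (Hi - Lo)).
    assert (0 <= t <= 1).
    { assert (E : s - Lo = t * (Hi - Lo)) by (unfold t; field; lra).
      clearbody t. unfold Lo, Hi in *. split; nra. }
    exists (Alo + t * (Ahi - Alo)), (Blo + t * (Bhi - Blo)).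
    split; [nra|split; [nra|]].
    assert (s = Lo + t * (Hi - Lo)) by (unfold t; field; lra).
    rewrite H6; unfold Lo, Hi; ring.
  - exists Alo, Blo. split; [lra|split; [lra|]]. unfold Lo, Hi in *; lra.
Qed.

Lemma three_pts S z a b c wa wb wc :
  0 <= wa -> 0 <= wb -> 0 <= wc -> wa + wb + wc = 1 -> S a -> S b -> S c ->
  z = pt_add (pt_scale wa a) (pt_add (pt_scale wb b) (pt_add (pt_scale wc c) pt_zero)) ->
  conv_hull S z.
Proof.
  intros. exists ((wa, a) :: (wb, b) :: (wc, c) :: nil).
  split; [repeat apply Forall_cons; try apply Forall_nil; simpl; auto|split; simpl; [lra|auto]].
Qed.

Lemma main_case Cup Clo V Vup p :
  Cup > Clo -> Clo > 0 -> V > 0 -> Vup + V <= Cup -> Clo < Vup -> Vup < Clo + V ->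
  Q2 Cup Clo V Vup p -> yp p <= yc p -> conv_hull (P2 Cup Clo V Vup) p.
Proof.
  destruct p as [x1 x2 y1 y2]; unfold Q2; simpl.
  intros ? ? ? ? ? ? (H1&H2&H3&H4&H5&H6&H7&H8&H9&H10&H11&H12) Hy.
  assert (Y1 : 0 <= y1) by nra.
  set (a1 := if Rlt_dec 0 y1 then x1 / y1 else Clo).
  assert (Ea : x1 = y1 * a1 /\ Clo <= a1 <= Cup).
  { unfold a1; destruct (Rlt_dec 0 y1).
    - split; [field; lra|]. split.
      + apply Rmult_le_reg_r with y1; auto. field_simplify; lra.
      + apply Rmult_le_reg_r with y1; auto. field_simplify; lra.
    - assert (y1 = 0) by lra. subst. split; lra. }
  destruct Ea as [Ex1 Ea].
  destruct (split_lemma y1 (y2 - y1) (Rmax Clo (a1 - V)) (Rmin Cup (a1 + V)) Clo Vup x2)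
    as [a2 [b2 [Ha2 [Hb2 Ex2]]]]; try lra.
  - apply Rmax_lub; [apply Rmin_glb|apply Rmin_glb]; lra.
  - apply Rmax_case_strong; intros; nra.
  - apply Rmin_case_strong; intros; nra.
  - assert (Clo <= a2 /\ a1 - V <= a2).
    { split; eapply Rle_trans; [| apply Ha2| |apply Ha2]; [apply Rmax_l|apply Rmax_r]. }
    assert (a2 <= Cup /\ a2 <= a1 + V).
    { split; eapply Rle_trans; [apply Ha2| |apply Ha2|]; [apply Rmin_l|apply Rmin_r]. }
    apply (three_pts _ _ (Pt4 a1 a2 1 1) (Pt4 0 b2 0 1) pt_zero y1 (y2 - y1) (1 - y2));
      try lra.
    + unfold P2, binary; simpl; lra.
    + unfold P2, binary; simpl; lra.
    + unfold P2, binary, pt_zero; simpl; lra.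
    + unfold pt_add, pt_scale, pt_zero; simpl. f_equal; lra.
Qed.

Theorem theorem1 (Cup Clo V Vup : R) :
  Cup > Clo -> Clo > 0 -> V > 0 -> Vup + V <= Cup ->
  Clo < Vup -> Vup < Clo + V ->
  forall p : pt4, Q2 Cup Clo V Vup p <-> conv_hull (P2 Cup Clo V Vup) p.
Proof.
  intros H0 H1 H2 H3 H4 H5 p. split.
  - intros HQ. destruct (Rle_dec (yp p) (yc p)).
    + apply main_case; auto.
    + apply swap_hull.
      * intros [? ? ? ?]; unfold P2, swap; simpl; tauto.
      * apply main_case; auto.
        -- destruct p; unfold Q2, swap in *; simpl in *; lra.
        -- destruct p; simpl in *; lra.
  - apply hull_sub; auto.
Qed.
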